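(* Under the standing setup, for all $n\ge n_0$, $$\mathbb{E}[\phi_{n,k}]\ge K^{-1}\alpha^{\ell}e^{Pk},$$ and moreover $$\lim_{n\to\infty}\frac1k\log\mathbb{E}[\phi_{n,k}]=P+\log\alpha.$$
   Context: Standing setup. $\mathcal{A}$ is a finite alphabet, $X\subset\mathcal{A}^{\mathbb{Z}}$ a non-trivial topologically mixing SFT with left shift $\sigma$, $f:X\to\mathbb{R}$ H\''older continuous with pressure $P=P_X(f)$, and $\mu$ the Gibbs measure (unique equilibrium state) of $f$. $B_m(X)$ is the set of words of length $m$ in $X$; $[w]=\{x\in X:x_0\dots x_{|w|-1}=w\}$, $\mu(w)=\mu([w])$. For $w\in B_m(X)$, $S_mf(w)=\sup_{x\in[w]}\sum_{i=0}^{m-1}f(\sigma^ix)$. $K>1$ is a constant such that: (i) for all $m\ge1$, $x\in X$: $K^{-1}\le\mu(x_0\dots x_{m-1})/\exp(-Pm+\sum_{i=0}^{m-1}f(\sigma^ix))\le K$; (ii) $\mu(uv)\le K\mu(u)\mu(v)$ and $\mu(\sigma^{-|u|}[v]\mid[u])\le K\mu(v)$ whenever $uv\in B(X)$. $\gamma_0=\inf\{\gamma>0:\exists n_0\ \forall m\ge n_0\ \forall u\in B_m(X),\ \mu(u)\le\gamma^m\}$. Parameters: $\alpha\in(\gamma_0,1]$; $\gamma\in(\gamma_0,\alpha)$; $n_0$ such that $\mu(u)\le\gamma^{|u|}$ for all $u\in B(X)$ with $|u|\ge n_0$; $k=k(n)$ with $n/k\to0$ and $k=o(n^2/\log n)$;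 $\ell=k-n+1$. Random SFT: for each $n$, $\mathcal{F}_n\subset B_n(X)$ is random, each word included independently with probability $1-\alpha$; $\mathbb{E}$ is expectation. For a word $u$ of length $\ge n$, $W_n(u)$ is the set of distinct length-$n$ subwords of $u$, and $\xi_u=1$ if $W_n(u)\cap\mathcal{F}_n=\emptyset$, $\xi_u=0$ otherwise. $\phi_{n,k}=\sum_{u\in B_k(X)}e^{S_kf(u)}\xi_u$. *)

(* Defs.v *)
From Stdlib Require Import Reals ZArith ClassicalEpsilon.
From mathcomp Require Import all_boot.

Set Implicit Arguments.
Unset Strict Implicit.
Unset Printing Implicit Defensive.

Local Open Scope R_scope.

Definition asbool (Q : Prop) : bool :=
  if excluded_middle_informative Q then true else false.

Definition rsum {T : Type} (s : seq T) (F : T -> R) : R :=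
  foldr (fun x acc => F x + acc) 0 s.

(* supremum / infimum of a set of reals (junk value if it does not exist) *)
Definition is_glb (E : R -> Prop) (g : R) : Prop :=
  (forall x, E x -> g <= x) /\ (forall b, (forall x, E x -> b <= x) -> b <= g).
Definition Rsup (E : R -> Prop) : R := epsilon (inhabits 0) (fun s => is_lub E s).
Definition Rinf (E : R -> Prop) : R := epsilon (inhabits 0) (fun s => is_glb E s).

Section Shift.
Variable A : finType.

Definition config := Z -> A.

Definition shiftn (i : nat) (x : config) : config := fun j => x (j + Z.of_nat i)%Z.

Definition word_at (x : config) (i : Z) (m : nat) : seq A :=
  [seq x (i + Z.of_nat j)%Z | j <- iota 0 m].

Definition is_SFT (X : config -> Prop) : Prop :=
  exists Fb : seq (seq A), forall x,
    X x <-> (forall w, w \in Fb -> forall i : Z, word_at x i (size w) <> w).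

Definition nontrivial (X : config -> Prop) : Prop :=
  exists x y, X x /\ X y /\ x <> y.

(* topological mixing, tested on the cylinder base of the topology *)
Definition cyl_at (i : Z) (w : seq A) (x : config) : Prop := word_at x i (size w) = w.
Definition top_mixing (X : config -> Prop) : Prop :=
  forall (i j : Z) (u v : seq A),
    (exists x, X x /\ cyl_at i u x) -> (exists y, X y /\ cyl_at j v y) ->
    exists N : nat, forall m : nat, (N <= m)%N ->
      exists z, X z /\ cyl_at i u z /\ cyl_at j v (shiftn m z).

(* Hoelder continuity on X w.r.t. the standard metric d(x,y)=2^{-min{|i| : x_i<>y_i}} *)
Definition holder (X : config -> Prop) (f : config -> R) : Prop :=
  exists C theta : R, 0 < theta < 1 /\
    forall (x y : config) (m : nat), X x -> X y ->
      (forall i : Z, (Z.abs i <= Z.of_nat m)%Z -> x i = y i) ->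
      Rabs (f x - f y) <= C * theta ^ m.

Definition inB (X : config -> Prop) (w : seq A) : Prop :=
  exists x i, X x /\ word_at x i (size w) = w.

Definition Bset (X : config -> Prop) (m : nat) : {set m.-tuple A} :=
  [set w : m.-tuple A | asbool (inB X (val w))].

Definition birk (f : config -> R) (m : nat) (x : config) : R :=
  rsum (iota 0 m) (fun i => f (shiftn i x)).

Definition Sk (X : config -> Prop) (f : config -> R) (w : seq A) : R :=
  Rsup (fun s => exists x, X x /\ word_at x 0 (size w) = w /\ s = birk f (size w) x).

Definition is_pressure (X : config -> Prop) (f : config -> R) (P : R) : Prop :=
  Un_cv (fun m => ln (rsum (enum (Bset X m)) (fun w => exp (Sk X f (val w)))) / INR m) P.

(* A shift-invariant Borel probability measure on X, given by its values
   mu(w) = mu([w]) on cylinders (Kolmogorov consistent family). *)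
Definition shift_inv_prob (X : config -> Prop) (mu : seq A -> R) : Prop :=
  [/\ forall w, 0 <= mu w,
      mu [::] = 1,
      forall w, rsum (enum A) (fun a => mu (rcons w a)) = mu w,
      forall w, rsum (enum A) (fun a => mu (a :: w)) = mu w
    & forall w, ~ inB X w -> mu w = 0].

Definition gamma0 (X : config -> Prop) (mu : seq A -> R) : R :=
  Rinf (fun g => 0 < g /\ exists N : nat, forall (m : nat) (u : seq A),
          (N <= m)%N -> inB X u -> size u = m -> mu u <= g ^ m).

Definition has_subword (n : nat) (w u : seq A) : bool :=
  has (fun i => take n (drop i u) == w) (iota 0 (size u - n + 1)).

Definition xi (n : nat) (F : {set n.-tuple A}) (u : seq A) : bool :=
  ~~ [exists w in F, has_subword n (val w) u].

(* phi_{n,k} for a given realisation F of F_n *)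
Definition phi (X : config -> Prop) (f : config -> R) (n k : nat)
    (F : {set n.-tuple A}) : R :=
  rsum (enum (Bset X k)) (fun u => exp (Sk X f (val u)) * (if xi F (val u) then 1 else 0)).

(* E[phi_{n,k}], each word of B_n(X) in F_n independently with prob. 1-alpha *)
Definition Ephi (X : config -> Prop) (f : config -> R) (alpha : R) (n k : nat) : R :=
  rsum (enum [set F : {set n.-tuple A} | F \subset Bset X n])
    (fun F => (1 - alpha) ^ #|F| * alpha ^ (#|Bset X n| - #|F|) * phi X f k F).

End Shift.

(* Main.v *)
Require Import Defs.
From Stdlib Require Import Reals ZArith ClassicalEpsilon Lra Lia.
From mathcomp Require Import all_boot.
From mathcomp Require zify all_algebra Rstruct.

Module M1.

Set Implicit Arguments.
Unset Strict Implicit.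
Unset Printing Implicit Defensive.
Local Open Scope R_scope.

Lemma rsum_nil (T : Type) (F : T -> R) : rsum [::] F = 0. Proof. by []. Qed.
Lemma rsum_cons (T : Type) x s (F : T -> R) : rsum (x :: s) F = F x + rsum s F. Proof. by []. Qed.
Lemma rsum_cat (T : Type) s1 s2 (F : T -> R) : rsum (s1 ++ s2) F = rsum s1 F + rsum s2 F.
Proof. elim: s1 => [|x s IH] /=; rewrite /rsum /= -?/(rsum _ _) ?IH; lra. Qed.
Lemma rsum_plusT (T : Type) s (F G : T -> R) : rsum s (fun x => F x + G x) = rsum s F + rsum s G.
Proof. elim: s => [|x s IH] /=; rewrite /rsum /= -?/(rsum _ _) ?IH; lra. Qed.
Section RS.
Variable T : eqType.
Implicit Types (s : seq T) (F G : T -> R).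

Lemma rsum_ext s F G : (forall x, x \in s -> F x = G x) -> rsum s F = rsum s G.
Proof. elim: s => [|x s IH] H //=; rewrite /rsum /= -!/(rsum _ _).
rewrite H ?mem_head // IH //. move=> y Hy; by apply H; rewrite in_cons Hy orbT. Qed.
Lemma rsum_extT s F G : (forall x, F x = G x) -> rsum s F = rsum s G.
Proof. by move=> H; apply rsum_ext => x _. Qed.
Lemma rsum_le s F G : (forall x, x \in s -> F x <= G x) -> rsum s F <= rsum s G.
Proof. elim: s => [|x s IH] H /=; rewrite /rsum /= -!/(rsum _ _); first lra.
have h1 := H x (mem_head _ _). have h2 : rsum s F <= rsum s G.
  apply IH => y Hy; by apply H; rewrite in_cons Hy orbT. lra. Qed.
Lemma rsum_ge0 s F : (forall x, x \in s -> 0 <= F x) -> 0 <= rsum s F.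
Proof. move=> H; have := rsum_le (F:=fun _ => 0) H.
suff -> : rsum s (fun _ => 0) = 0 by []. by elim: s {H} => //= x s; rewrite /rsum /= => ->; lra. Qed.
Lemma rsum_scal s c F : rsum s (fun x => c * F x) = c * rsum s F.
Proof. elim: s => [|x s IH] /=; rewrite /rsum /= -?/(rsum _ _) ?IH; lra. Qed.
Lemma rsum_scalr s c F : rsum s (fun x => F x * c) = rsum s F * c.
Proof. rewrite Rmult_comm -rsum_scal; apply rsum_extT => x; lra. Qed.
Lemma rsum_plus s F G : rsum s (fun x => F x + G x) = rsum s F + rsum s G.
Proof. elim: s => [|x s IH] /=; rewrite /rsum /= -?/(rsum _ _) ?IH; lra. Qed.
Lemma rsum_const s c : rsum s (fun _ => c) = INR (size s) * c.
Proof. elim: s => [|x s IH]; first by rewrite rsum_nil /=; lra.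
rewrite rsum_cons IH; change (size (x::s)) with (S (size s)); rewrite S_INR; lra. Qed.
Lemma rsum_ge_mem s F x : (forall y, y \in s -> 0 <= F y) -> x \in s -> F x <= rsum s F.
Proof. elim: s => [|y s IH] H //=; rewrite /rsum /= -!/(rsum _ _) in_cons => /orP [/eqP ->|hx].
- have : 0 <= rsum s F. apply rsum_ge0 => z hz; apply H; by rewrite in_cons hz orbT. lra.
- have h1 := H y (mem_head _ _).
  have h2 : F x <= rsum s F. apply IH => //. move=> z hz; apply H; by rewrite in_cons hz orbT.
  lra.
Qed.
End RS.

Lemma rsum_map (T U : Type) (h : T -> U) (s : seq T) (F : U -> R) :
  rsum (map h s) F = rsum s (fun x => F (h x)).
Proof. elim: s => [|x s IH]; first by []. by rewrite map_cons !rsum_cons IH. Qed.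

Lemma rsum_flatten (T : Type) (ss : seq (seq T)) (F : T -> R) :
  rsum (flatten ss) F = rsum ss (fun s => rsum s F).
Proof. elim: ss => [|s ss IH]; first by [].
change (flatten (s :: ss)) with (s ++ flatten ss); by rewrite rsum_cat IH rsum_cons. Qed.

Lemma rsum_allpairs (T U V : Type) (h : T -> U -> V) (s : seq T) (t : seq U) (F : V -> R) :
  rsum [seq h x y | x <- s, y <- t] F = rsum s (fun x => rsum t (fun y => F (h x y))).
Proof. elim: s => [|x s IH]; first by [].
change (rsum ([seq h x y | y <- t] ++ [seq h x0 y | x0 <- s, y <- t]) F = rsum (x :: s) (fun x => rsum t (fun y => F (h x y)))).
by rewrite rsum_cat IH rsum_map rsum_cons. Qed.

Lemma rsum_exch (T U : Type) (s : seq T) (t : seq U) (F : T -> U -> R) :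
  rsum s (fun x => rsum t (fun y => F x y)) = rsum t (fun y => rsum s (fun x => F x y)).
Proof. elim: s => [|x s IH].
- rewrite rsum_nil; elim: t => [|y t IH]; first by []. rewrite !rsum_cons -IH !rsum_nil; lra.
- by rewrite rsum_cons IH -rsum_plusT.
Qed.

Lemma rsum_perm (T : eqType) (s t : seq T) (F : T -> R) : perm_eq s t -> rsum s F = rsum t F.
Proof.
elim: s t => [|x s IH] t.
- by rewrite perm_sym => /perm_nilP ->.
- move=> pst. have xt : x \in t by rewrite -(perm_mem pst) mem_head.
  case/splitPr: xt pst => t1 t2 pst.
  have h : perm_eq (t1 ++ x :: t2) (x :: (t1 ++ t2)) by rewrite -cat1s perm_catCA.
  move: (perm_trans pst h); rewrite perm_cons => /IH e.
  rewrite rsum_cons e.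
  rewrite !rsum_cat !rsum_cons; lra.
Qed.

End M1.
Import M1.

Module M2.

Set Implicit Arguments.
Unset Strict Implicit.
Unset Printing Implicit Defensive.
Local Open Scope R_scope.

Lemma rsum_filter (T : Type) (P : pred T) s (H : T -> R) :
  rsum (filter P s) H = rsum s (fun x => if P x then H x else 0).
Proof. elim: s => [|x s IH]; first by [].
rewrite rsum_cons -IH.
change (filter P (x::s)) with (if P x then x :: filter P s else filter P s).
case: (P x); [by rewrite rsum_cons| lra]. Qed.

Section Words.
Variable A : finType.

Fixpoint allw (m : nat) : seq (seq A) :=
  if m is m'.+1 then [seq a :: w | a <- enum A, w <- allw m'] else [:: [::]].

Lemma mem_allw m w : (w \in allw m) = (size w == m).
Proof.
elim: m w => [|m IH] [|a w] //=.
- apply/allpairsP => [[[b v] /= [_ _ e]]] //.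
- apply/allpairsP/idP => [[[b v] /= [hb hv [ea ew]]]|hs].
  + by rewrite eqSS ew -IH.
  + by exists (a, w) => /=; rewrite mem_enum IH; split.
Qed.

Lemma uniq_allw m : uniq (allw m).
Proof.
elim: m => [|m IH] //=. apply: allpairs_uniq => //; first exact: enum_uniq.
by move=> [a w] [b v] _ _ /= [ea ew]; rewrite ea ew.
Qed.

Lemma rsum_allw_split m1 m2 (F : seq A -> R) :
  rsum (allw (m1 + m2)) F = rsum (allw m1) (fun a => rsum (allw m2) (fun b => F (a ++ b))).
Proof.
elim: m1 F => [|m1 IH] F.
- rewrite add0n; change (allw 0) with [:: [::] : seq A].
  by rewrite rsum_cons rsum_nil Rplus_0_r.
- rewrite addSn. change (allw (m1 + m2).+1) with [seq a :: w | a <- enum A, w <- allw (m1+m2)].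
  change (allw m1.+1) with [seq a :: w | a <- enum A, w <- allw m1].
  rewrite !rsum_allpairs. apply rsum_extT => a. by rewrite IH.
Qed.

Lemma rsum_tuple m (G : seq A -> R) :
  rsum (Finite.enum (m.-tuple A)) (fun t => G (val t)) = rsum (allw m) G.
Proof.
rewrite -(rsum_map val). apply rsum_perm. apply uniq_perm.
- by rewrite (map_inj_uniq val_inj) -enumT enum_uniq.
- exact: uniq_allw.
- move=> w; rewrite mem_allw; apply/mapP/idP => [[t _ ->]|hs].
  + by rewrite size_tuple.
  + by exists (Tuple hs); rewrite // -enumT mem_enum.
Qed.

Lemma rsum_enum_set m (S : {set m.-tuple A}) (H : m.-tuple A -> R) :
  rsum (enum S) H = rsum (Finite.enum (m.-tuple A)) (fun t => if t \in S then H t else 0).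
Proof.
by rewrite /enum_mem rsum_filter.
Qed.

Variable mu : seq A -> R.
Hypothesis mu_r : forall w, rsum (enum A) (fun a => mu (rcons w a)) = mu w.

Lemma rsum_ext_mu m a : rsum (allw m) (fun b => mu (a ++ b)) = mu a.
Proof.
elim: m a => [|m IH] a.
- change (allw 0) with [:: [::] : seq A].
  by rewrite rsum_cons rsum_nil cats0 Rplus_0_r.
- change (allw m.+1) with [seq a :: w | a <- enum A, w <- allw m].
  rewrite rsum_allpairs -mu_r. apply rsum_extT => c.
  rewrite -IH. apply rsum_extT => b. by rewrite cat_rcons.
Qed.

Lemma rsum_mu m : rsum (allw m) mu = mu [::].
Proof. by rewrite -(rsum_ext_mu m [::]). Qed.

Lemma rsum_prefix m L (G : seq A -> R) : (m <= L)%N ->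
  rsum (allw L) (fun u => mu u * G (take m u)) = rsum (allw m) (fun a => mu a * G a).
Proof.
move=> hmL. rewrite -(subnKC hmL) rsum_allw_split. apply rsum_ext => a.
rewrite mem_allw => /eqP ha.
rewrite (rsum_extT _ (G := fun b => mu (a ++ b) * G a)); last first.
  by move=> b; rewrite take_size_cat.
by rewrite rsum_scalr rsum_ext_mu.
Qed.
End Words.

End M2.
Import M2.

Module M3.
Import zify.

Set Implicit Arguments.
Unset Strict Implicit.
Unset Printing Implicit Defensive.
Local Open Scope R_scope.

Lemma ln_le' x y : 0 < x -> x <= y -> ln x <= ln y.
Proof. move=> hx [h|->]; last lra. left; exact: ln_increasing. Qed.
Lemma exp_le' x y : x <= y -> exp x <= exp y.
Proof. move=> [h|->]; last lra. left; exact: exp_increasing. Qed.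

Section Shift2.
Variable A : finType.
Implicit Types (x : config A) (u v : seq A).

Lemma size_word_at x i m : size (word_at x i m) = m.
Proof. by rewrite /word_at size_map size_iota. Qed.

Lemma word_at_cat x i m1 m2 :
  word_at x i (m1 + m2) = word_at x i m1 ++ word_at x (i + Z.of_nat m1) m2.
Proof.
rewrite /word_at iotaD map_cat; congr (_ ++ _).
have -> : iota (0 + m1) m2 = map (addn m1) (iota 0 m2) by rewrite -iotaDl addn0.
rewrite -map_comp. apply eq_map => j /=.
by rewrite Nat2Z.inj_add Z.add_assoc.
Qed.

Variable X : config A -> Prop.

Lemma inB_catl u v : inB X (u ++ v) -> inB X u.
Proof.
move=> [x [i [hx hw]]]. exists x, i; split => //.
move: hw; rewrite size_cat word_at_cat => /eqP.
by rewrite eqseq_cat ?size_word_at // => /andP [/eqP -> _].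
Qed.

Lemma inB_catr u v : inB X (u ++ v) -> inB X v.
Proof.
move=> [x [i [hx hw]]]. exists x, (i + Z.of_nat (size u))%Z; split => //.
move: hw; rewrite size_cat word_at_cat => /eqP.
by rewrite eqseq_cat ?size_word_at // => /andP [_ /eqP ->].
Qed.

Definition win (n : nat) u (i : nat) := take n (drop i u).

Lemma inB_win n u i : inB X u -> (i + n <= size u)%N -> inB X (win n u i).
Proof.
move=> hu hi. rewrite -(cat_take_drop (i + n) u) takeD in hu.
exact: inB_catr (inB_catl hu).
Qed.

Lemma size_win n u i : (i + n <= size u)%N -> size (win n u i) = n.
Proof. move=> h. rewrite /win size_take size_drop. case: ifP => // /negbT; rewrite -leqNgt => h2; apply/eqP; rewrite eqn_leq h2 /=; lia. Qed.

Hypothesis SFT : is_SFT X.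

Lemma X_shift x (i : Z) : X x -> X (fun j => x (j + i)%Z).
Proof.
case: SFT => Fb hF. move/hF => h. apply/hF => w hw j.
have -> : word_at (fun j0 => x (j0 + i)%Z) j (size w) = word_at x (j + i) (size w).
  rewrite /word_at; apply eq_map => t; congr x; lia.
exact: h.
Qed.

Lemma inB_at0 u : inB X u -> exists y, X y /\ word_at y 0 (size u) = u.
Proof.
move=> [x [i [hx hw]]]. exists (fun j => x (j + i)%Z); split; first exact: X_shift.
transitivity (word_at x i (size u)); last exact hw.
rewrite /word_at; apply eq_map => t; congr x; lia.
Qed.

Lemma inB_word_at x m : X x -> inB X (word_at x 0 m).
Proof. by move=> hx; exists x, 0%Z; rewrite size_word_at. Qed.

End Shift2.

End M3.
Import M3.

Module M4.
Import zify.

Set Implicit Arguments.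
Unset Strict Implicit.
Unset Printing Implicit Defensive.
Local Open Scope R_scope.

Section Gibbs.
Variable A : finType.
Variables (X : config A -> Prop) (f : config A -> R) (mu : seq A -> R) (P K : R).
Hypothesis SFT : is_SFT X.
Hypothesis mu_nil : mu [::] = 1.
Hypothesis K1 : 1 < K.
Hypothesis gibbs : forall (m : nat) (x : config A), (1 <= m)%N -> X x ->
     / K <= mu (word_at x 0 m) / exp (- P * INR m + birk f m x) <= K.

Lemma gibbs0 m x : X x -> / K <= mu (word_at x 0 m) / exp (- P * INR m + birk f m x) <= K.
Proof.
case: m => [|m] hx; last by apply: gibbs.
have -> : word_at x 0 0 = [::] by [].
have -> : birk f 0 x = 0 by [].
rewrite mu_nil /= Rmult_0_r Rplus_0_r exp_0 /Rdiv Rinv_1 Rmult_1_r.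
split; last lra. rewrite -Rinv_1; apply Rinv_le_contravar; lra.
Qed.

Lemma gibbs_exp m x : X x ->
  / K * exp (P * INR m) * mu (word_at x 0 m) <= exp (birk f m x) <=
  K * exp (P * INR m) * mu (word_at x 0 m).
Proof.
move=> hx. have [h1 h2] := gibbs0 m hx.
set E := exp (- P * INR m + birk f m x) in h1 h2.
set r := mu (word_at x 0 m) / E in h1 h2.
set e := exp (P * INR m).
have hE : 0 < E by apply exp_pos.
have he : 0 < e by apply exp_pos.
have hmu : mu (word_at x 0 m) = r * E by rewrite /r /Rdiv Rmult_assoc Rinv_l; lra.
have hb : exp (birk f m x) = e * E.
  by rewrite /e /E -exp_plus; congr exp; ring.
have hK : 0 < K by lra.
have hKi : / K * K = 1 by apply Rinv_l; lra.
rewrite hmu hb. split.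
- have : / K * r <= 1.
    have := Rmult_le_compat_l (/K) _ _ (ltac:(left; apply Rinv_0_lt_compat; lra)) h2. lra.
  move=> h. have : / K * e * (r * E) = (/ K * r) * (e * E) by ring.
  move=> ->. have : 0 < e * E by nra. nra.
- have : 1 <= K * r.
    have := Rmult_le_compat_l K _ _ (ltac:(lra)) h1. rewrite Rinv_r; lra.
  move=> h. have : K * e * (r * E) = (K * r) * (e * E) by ring.
  move=> ->. have : 0 < e * E by nra. nra.
Qed.

Lemma mu_pos u : inB X u -> 0 < mu u.
Proof.
move/(inB_at0 SFT) => [y [hy hw]].
have [h1 h2] := gibbs0 (size u) hy. rewrite hw in h1.
have hE := exp_pos (- P * INR (size u) + birk f (size u) y).
have hKi : 0 < / K by apply Rinv_0_lt_compat; lra.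
have : 0 < mu u / exp (- P * INR (size u) + birk f (size u) y) by lra.
rewrite /Rdiv => h. have := Rinv_0_lt_compat _ hE => hi.
destruct (Rle_or_lt (mu u) 0) as [hn|hp]; last exact hp.
nra.
Qed.

Lemma Sk_bounds u : inB X u ->
  / K * exp (P * INR (size u)) * mu u <= exp (Sk X f u) <=
  K * exp (P * INR (size u)) * mu u.
Proof.
move=> hu. have hmu := mu_pos hu.
set E := (fun s => exists x, X x /\ word_at x 0 (size u) = u /\ s = birk f (size u) x).
have [y [hy hw]] := inB_at0 SFT hu.
set M := K * exp (P * INR (size u)) * mu u.
have hM : 0 < M.
  rewrite /M; apply Rmult_lt_0_compat; [apply Rmult_lt_0_compat; [lra| apply exp_pos] | exact hmu].
have hbnd : forall s, E s -> s <= ln M.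
  move=> s [x [hx [hwx ->]]]. have [_ h] := gibbs_exp (size u) hx.
  rewrite hwx in h. rewrite -(ln_exp (birk f (size u) x)). apply ln_le' => //; apply exp_pos.
have hne : exists s, E s by exists (birk f (size u) y); exists y.
have hlub : is_lub E (Rsup E).
  rewrite /Rsup; apply epsilon_spec. have [m hm] := completeness E (ex_intro _ (ln M) hbnd) hne. by exists m.
have hS : Sk X f u = Rsup E by [].
rewrite hS. split.
- have hle : birk f (size u) y <= Rsup E by apply hlub; exists y.
  have [h _] := gibbs_exp (size u) hy. rewrite hw in h.
  apply (Rle_trans _ _ _ h). exact: exp_le'.
- have hle : Rsup E <= ln M by apply hlub.
  rewrite -(exp_ln M hM). exact: exp_le'.
Qed.

End Gibbs.

End M4.
Import M4.

Module M5.
Import all_boot all_algebra.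
Import Rstruct.

Set Implicit Arguments.
Unset Strict Implicit.
Unset Printing Implicit Defensive.
Import GRing.Theory.

Lemma rsumE (T : Type) (s : seq T) (F : T -> R) : rsum s F = (\sum_(x <- s) F x)%R.
Proof. by rewrite unlock /rsum. Qed.

Section SubsetSum.
Local Open Scope ring_scope.
Variable T : finType.
Variables (B H : {set T}) (a b : R).
Hypothesis hab : a + b = 1.

Let Fi i := if i \in B :\: H then a else 0.
Let Gi i := if i \in B then b else 1.

Lemma subset_sum_mc :
  \sum_(F in [set F : {set T} | F \subset B])
     a ^+ #|F| * b ^+ (#|B| - #|F|) * (if ~~ [exists w in F, w \in H] then 1 else 0)
  = b ^+ #|B :&: H|.
Proof.
have step1 : b ^+ #|B :&: H| = \prod_i (Fi i + Gi i).
  rewrite -prodr_const big_mkcond /=. apply eq_bigr => i _.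
  rewrite /Fi /Gi !inE. case: (i \in H); case: (i \in B) => /=;
    by rewrite ?add0r ?hab.
rewrite step1 bigA_distr big_mkcond /=. apply eq_bigr => J _.
rewrite inE.
have hcond : (J \subset B) && ~~ [exists w in J, w \in H] = (J \subset B :\: H).
  apply/idP/idP.
  - move=> /andP [/subsetP hJB hne]. apply/subsetP => i hi.
    rewrite inE hJB // andbT. apply/negP => hiH. move/negP: hne; apply.
    by apply/existsP; exists i; rewrite hi hiH.
  - move/subsetP => hJ. apply/andP; split.
    + apply/subsetP => i /hJ; rewrite inE => /andP [_ ->] //.
    + apply/negP => /existsP [i /andP [hi hiH]]. move: (hJ i hi); rewrite inE hiH //.
case hJ: (J \subset B :\: H).
- move: hcond; rewrite hJ => /andP [hJB hne]. rewrite hJB hne mulr1.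
  rewrite (bigID (mem J)) /=. congr (_ * _).
  + rewrite (eq_bigr (fun _ => a)); first by rewrite prodr_const.
    move=> i /= hi. rewrite hi /Fi. by move/subsetP: hJ => ->.
  + rewrite (eq_bigr (fun i => if i \in B then b else 1)); last first.
      by move=> i /= /negbTE ->.
    rewrite -big_mkcondr /= prodr_const. congr (_ ^+ _).
    have -> : #|[pred i | true && ~~ (i \in J) && (i \in B)]| = #|B :\: J|.
      by apply eq_card => i; rewrite !inE andbC.
    by rewrite cardsD (setIidPr hJB).
- have [i hi hFi] : exists2 i, i \in J & Fi i = 0.
    move/negbT: hJ => /subsetPn [i hi hni]. exists i => //.
    by rewrite /Fi (negbTE hni).
  rewrite (bigD1 i) //= hi hFi mul0r.
  case hB: (J \subset B) => //. move: hcond; rewrite hB hJ /= => ->.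
  by rewrite mulr0.
Qed.
End SubsetSum.

Local Open Scope R_scope.

Lemma subset_sum (T : finType) (B H : {set T}) (a b : R) : a + b = 1 ->
  rsum (enum [set F : {set T} | F \subset B])
    (fun F => a ^ #|F| * b ^ (#|B| - #|F|) * (if ~~ [exists w in F, w \in H] then 1 else 0))
  = b ^ #|B :&: H|.
Proof.
move=> hab. rewrite rsumE big_enum /= RpowE -(@subset_sum_mc T B H a b hab).
apply eq_bigr => F _. by rewrite !RpowE.
Qed.

Section Expect.
Variable A : finType.
Variables (X : config A -> Prop) (f : config A -> R) (alpha : R) (n k : nat).

Definition Wset (u : seq A) : {set n.-tuple A} :=
  Bset X n :&: [set w : n.-tuple A | has_subword n (val w) u].

Lemma Ephi_eq :
  Ephi X f alpha n k =
  rsum (enum (Bset X k)) (fun u => exp (Sk X f (val u)) * alpha ^ #|Wset (val u)|).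
Proof.
rewrite /Ephi /phi.
rewrite (rsum_extT _ (G := fun F : {set n.-tuple A} => rsum (enum (Bset X k)) (fun u =>
   (1 - alpha) ^ #|F| * alpha ^ (#|Bset X n| - #|F|) *
   (exp (Sk X f (val u)) * (if xi F (val u) then 1 else 0))))); last first.
  by move=> F; rewrite rsum_scal.
rewrite rsum_exch. apply rsum_extT => u.
rewrite /Wset -(subset_sum (Bset X n) [set w : n.-tuple A | has_subword n (val w) (val u)]
   (a := 1 - alpha) (b := alpha)); last by ring.
rewrite -rsum_scal. apply rsum_extT => F.
have -> : xi F (val u) = ~~ [exists w in F, w \in [set w : n.-tuple A | has_subword n (val w) (val u)]].
  rewrite /xi; congr (~~ _); apply eq_existsb => w; by rewrite inE.
set t := (if _ then _ else _). set c1 := (1 - alpha) ^ _. set c2 := alpha ^ _.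
set e := exp _. rewrite -!Rmult_assoc. rewrite (Rmult_comm e c1) (Rmult_assoc c1 e c2) (Rmult_comm e c2) -Rmult_assoc. by [].
Qed.
End Expect.

End M5.
Import M5.

Module M6.
Import zify.

Set Implicit Arguments.
Unset Strict Implicit.
Unset Printing Implicit Defensive.
Local Open Scope R_scope.

Lemma Rle_pow' x m p : 1 <= x -> (m <= p)%N -> x ^ m <= x ^ p.
Proof. move=> h /leP hp; exact: Rle_pow. Qed.

Lemma rsum_unique (T : eqType) (s : seq T) (Pp : pred T) (g : T -> R) M :
  uniq s -> (forall x y, x \in s -> y \in s -> Pp x -> Pp y -> x = y) ->
  (forall x, x \in s -> Pp x -> g x <= M) -> 0 <= M ->
  rsum s (fun x => if Pp x then g x else 0) <= M.
Proof.
elim: s => [|x s IH] hu huniq hg hM; first by rewrite rsum_nil.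
move: hu; rewrite cons_uniq => /andP [hx hus]. rewrite rsum_cons.
case hPx: (Pp x).
- have -> : rsum s (fun x => if Pp x then g x else 0) = 0.
    rewrite (rsum_ext (G := fun _ => 0)); first by rewrite rsum_const; lra.
    move=> y hy. case hPy: (Pp y) => //.
    have e := huniq x y (mem_head _ _) (ltac:(by rewrite in_cons hy orbT)) hPx hPy.
    by move: hx; rewrite e hy.
  have := hg x (mem_head _ _) hPx. lra.
- have : rsum s (fun x => if Pp x then g x else 0) <= M.
    apply IH => //.
    + move=> y z hy hz; apply huniq; by rewrite in_cons ?hy ?hz orbT.
    + move=> y hy; apply hg; by rewrite in_cons hy orbT.
  lra.
Qed.

Lemma has_le_sum (T : Type) (Pp : pred T) (l : seq T) :
  (if has Pp l then 1 else 0) <= rsum l (fun j => if Pp j then 1 else 0).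
Proof.
elim: l => [|x l IH]; first by rewrite rsum_nil /=; lra.
rewrite rsum_cons. have h0 : 0 <= rsum l (fun j => if Pp j then 1 else 0).
  elim: (l) => [|y l' IH']; rewrite ?rsum_nil ?rsum_cons; try lra. case: (Pp y); lra.
rewrite [has _ _]/=. case: (Pp x) => /=; lra.
Qed.

Section Rep.
Variable A : finType.
Variable n : nat.
Implicit Types (u a c : seq A).

Definition rep u (i : nat) : bool := has (fun j => win n u j == win n u i) (iota 0 i).

Lemma win_take m u j : (j + n <= m)%N -> win n (take m u) j = win n u j.
Proof. move=> h. by rewrite /win !take_drop take_takel // addnC. Qed.

Lemma rep_take m u i : (i + n <= m)%N -> rep (take m u) i = rep u i.
Proof.
move=> h. rewrite /rep win_take //. apply eq_in_has => j.
rewrite mem_iota => /andP [_ hj]. rewrite win_take //. lia.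
Qed.

Lemma win_cat_last a c : size c = n -> win n (a ++ c) (size a) = c.
Proof. move=> hc. by rewrite /win drop_size_cat // -hc take_size. Qed.

Lemma win_unique a c c' j : (j < size a)%N -> size c = n -> size c' = n ->
  win n (a ++ c) j = c -> win n (a ++ c') j = c' -> c = c'.
Proof.
move=> hj hc hc' e e'.
case: c hc e => [|x0 c] hc e; first by apply/esym/size0nil; rewrite hc' -hc.
set C := x0 :: c in hc e *.
have key : forall i, (i < n)%N -> nth x0 C i = nth x0 c' i.
  elim/ltn_ind => i IH hi.
  have h1 : nth x0 C i = nth x0 (a ++ C) (j + i) by rewrite -{1}e /win nth_take // nth_drop.
  have h2 : nth x0 c' i = nth x0 (a ++ c') (j + i) by rewrite -{1}e' /win nth_take // nth_drop.
  rewrite h1 h2 !nth_cat. case: ifP => // hlt.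
  apply IH; lia.
apply: (@eq_from_nth A x0); first by rewrite hc hc'.
move=> i; rewrite hc => hi; exact: key.
Qed.

Variables (X : config A -> Prop) (mu : seq A -> R) (K gamma : R) (n0 : nat).
Hypothesis mu_r : forall w, rsum (enum A) (fun x : A => mu (rcons w x)) = mu w.
Hypothesis mu_ge0 : forall w, 0 <= mu w.
Hypothesis mu_offB : forall w, ~ inB X w -> mu w = 0.
Hypothesis mu_mult : forall u v, inB X (u ++ v) -> mu (u ++ v) <= K * mu u * mu v.
Hypothesis mu_gamma : forall u, inB X u -> (n0 <= size u)%N -> mu u <= gamma ^ size u.
Hypothesis hn0 : (n0 <= n)%N.
Hypothesis K0 : 0 < K.
Hypothesis gamma0 : 0 < gamma.

Lemma mu_cat_bound a c : size c = n -> mu (a ++ c) <= K * gamma ^ n * mu a.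
Proof.
move=> hc. have hg := pow_le gamma n (ltac:(lra)). have ha := mu_ge0 a.
have hKg : 0 <= K * gamma ^ n * mu a by apply Rmult_le_pos; [apply Rmult_le_pos; lra| lra].
case: (classic (inB X (a ++ c))) => hB; last by rewrite mu_offB.
apply (Rle_trans _ _ _ (mu_mult hB)).
have := mu_gamma (inB_catr hB). rewrite hc => /(_ hn0) hmc.
have hKa : 0 <= K * mu a by apply Rmult_le_pos; lra.
have := Rmult_le_compat_l _ _ _ hKa hmc. lra.
Qed.

Lemma key_bound s L (G : seq A -> R) : (s + n <= L)%N -> (forall a, 0 <= G a) ->
  rsum (allw A L) (fun u => mu u * ((if rep u s then 1 else 0) * G (take s u)))
  <= INR s * (K * gamma ^ n) * rsum (allw A s) (fun a => mu a * G a).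
Proof.
move=> hL hG.
rewrite (rsum_extT _ (G := fun u => mu u * (fun p => (if rep p s then 1 else 0) * G (take s p)) (take (s + n) u))); last first.
  by move=> u /=; rewrite rep_take // take_takel // leq_addr.
have e := @rsum_prefix A mu mu_r (s + n) L (fun p => (if rep p s then 1 else 0) * G (take s p)) hL.
rewrite e rsum_allw_split.
rewrite -rsum_scal. apply rsum_le => a. rewrite mem_allw => /eqP ha.
rewrite (rsum_ext (G := fun c => (if rep (a ++ c) s then 1 else 0) * mu (a ++ c) * G a)); last first.
  move=> c _. rewrite take_size_cat //. set t := (if _ then _ else _). set m := mu _. ring.
have hs : forall c, size c = n -> (if rep (a ++ c) s then 1 else 0) <=
     rsum (iota 0 s) (fun j => if win n (a ++ c) j == c then 1 else 0).
  move=> c hc. rewrite /rep -ha win_cat_last //. exact: has_le_sum.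
apply Rle_trans with (rsum (allw A n) (fun c =>
   rsum (iota 0 s) (fun j => (if win n (a ++ c) j == c then mu (a ++ c) else 0)) * G a)).
  apply rsum_le => c; rewrite mem_allw => /eqP hc.
  apply Rmult_le_compat_r => //.
  apply Rle_trans with (rsum (iota 0 s) (fun j => (if win n (a ++ c) j == c then 1 else 0) * mu (a ++ c))).
    rewrite rsum_scalr. apply Rmult_le_compat_r => //. exact: hs.
  apply rsum_le => j _. case: ifP => _; lra.
rewrite rsum_scalr rsum_exch.
rewrite -Rmult_assoc. apply Rmult_le_compat_r => //.
have -> : INR s * (K * gamma ^ n) * mu a = INR (size (iota 0 s)) * (K * gamma ^ n * mu a).
  rewrite size_iota; ring.
rewrite -rsum_const.
apply rsum_le => j. rewrite mem_iota => /andP [_ hj].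
apply rsum_unique.
- exact: uniq_allw.
- move=> c c'; rewrite !mem_allw => /eqP hc /eqP hc' /eqP e1 /eqP e2.
  by apply: (win_unique _ hc hc' e1 e2); rewrite ha.
- move=> c; rewrite mem_allw => /eqP hc _. exact: mu_cat_bound hc.
- have hg := pow_le gamma n (ltac:(lra)). have hm := mu_ge0 a. apply Rmult_le_pos => //; apply Rmult_le_pos; lra.
Qed.

Hypothesis mu_nil : mu [::] = 1.

Definition gapped L (C : seq nat) :=
  pairwise (fun x y => (y + n <= x)%N) C && all (fun i => (i + n <= L)%N) C.

Lemma rep_bound C L Q : 1 <= Q -> gapped L C ->
  rsum (allw A L) (fun u => mu u * Q ^ count (rep u) C)
  <= (1 + Q * (INR L * (K * gamma ^ n))) ^ size C.
Proof.
move=> hQ. elim: C L => [|s C IH] L.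
- move=> _. rewrite (rsum_extT _ (G := mu)); last by move=> u /=; ring.
  by rewrite rsum_mu // mu_nil /=; lra.
- rewrite /gapped /= => /andP [/andP [hall hpw] /andP [hsL hallL]].
  have hgC : gapped s C by rewrite /gapped hpw hall.
  set G := fun a => Q ^ count (rep a) C.
  have hG0 : forall a, 0 <= G a by move=> a; apply pow_le; lra.
  have hGt : forall u, Q ^ count (rep u) C = G (take s u).
    move=> u; rewrite /G; congr (_ ^ _). apply eq_in_count => i hi.
    rewrite rep_take //. by move/allP: hall => /(_ i hi).
  have hKg : 0 <= K * gamma ^ n by apply Rmult_le_pos; [lra | apply pow_le; lra].
  set S := rsum (allw A s) (fun a => mu a * G a).
  have hS0 : 0 <= S by apply rsum_ge0 => a _; apply Rmult_le_pos.
  have hIH : S <= (1 + Q * (INR s * (K * gamma ^ n))) ^ size C.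
    rewrite /S /G. exact: IH.
  apply Rle_trans with (rsum (allw A L) (fun u => mu u * G (take s u)) +
     Q * rsum (allw A L) (fun u => mu u * ((if rep u s then 1 else 0) * G (take s u)))).
    rewrite -rsum_scal -rsum_plusT. apply rsum_le => u _.
    rewrite pow_add hGt. have := mu_ge0 u. have := hG0 (take s u).
    case: (rep u s) => /=; nra.
  have e1 := @rsum_prefix A mu mu_r s L G (leq_trans (leq_addr n s) hsL).
  rewrite e1 -/S.
  have hk := key_bound hsL hG0. rewrite -/S in hk.
  have hsLr : INR s <= INR L by apply le_INR; apply/leP; exact: leq_trans (leq_addr n s) hsL.
  apply Rle_trans with ((1 + Q * (INR s * (K * gamma ^ n))) * S).
    have : Q * rsum (allw A L) (fun u => mu u * ((if rep u s then 1 else 0) * G (take s u)))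
       <= Q * (INR s * (K * gamma ^ n) * S) by apply Rmult_le_compat_l; lra.
    lra.
  rewrite [size _]/= /=.
  have hb : 0 <= Q * (INR s * (K * gamma ^ n)).
    apply Rmult_le_pos; first lra. apply Rmult_le_pos => //; apply pos_INR.
  apply Rle_trans with ((1 + Q * (INR s * (K * gamma ^ n))) * (1 + Q * (INR s * (K * gamma ^ n))) ^ size C).
    apply Rmult_le_compat_l; lra.
  apply Rmult_le_compat.
  + lra.
  + apply pow_le; lra.
  + apply Rplus_le_compat_l, Rmult_le_compat_l; first lra. apply Rmult_le_compat_r => //.
  + apply pow_incr; split; first lra.
    apply Rplus_le_compat_l, Rmult_le_compat_l; first lra. apply Rmult_le_compat_r => //.
Qed.
End Rep.

End M6.
Import M6.

Module M7.
Import zify.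

Set Implicit Arguments.
Unset Strict Implicit.
Unset Printing Implicit Defensive.

Lemma mod_gap n r x y : (0 < n)%N -> x %% n = r -> y %% n = r -> (y < x)%N -> (y + n <= x)%N.
Proof. move=> hn hx hy hxy. have e1 := divn_eq x n. have e2 := divn_eq y n.
rewrite hx in e1. rewrite hy in e2. set a := x %/ n in e1. set b := y %/ n in e2.
have hab : (b < a)%N. { rewrite e1 e2 in hxy. rewrite -(ltn_pmul2r hn). lia. }
rewrite e1 e2. have : (b.+1 * n <= a * n)%N by rewrite leq_pmul2r. lia. Qed.

Lemma cnt_split n (P : pred nat) l : (0 < n)%N ->
  count P l = \sum_(r < n) count P (filter (fun i => i %% n == r) l).
Proof.
move=> hn. elim: l => [|x l IH].
- by rewrite big1.
- under eq_bigr => r _ do rewrite count_filter.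
  rewrite /= big_split /=. rewrite IH. congr (_ + _); last first.
    by apply eq_bigr => r _; rewrite count_filter.
  case: (P x); last by rewrite big1.
  rewrite (bigD1 (Ordinal (ltn_pmod x hn))) //= eqxx big1 //.
  move=> r /negbTE hr. apply/eqP; rewrite eqb0. apply/negP => /eqP e.
  have : r == Ordinal (ltn_pmod x hn) by apply/eqP/val_inj; rewrite /= e.
  by rewrite hr.
Qed.

Lemma cnt_max n (P : pred nat) l : (0 < n)%N ->
  exists2 r, (r < n)%N & (count P l <= n * count P (filter (fun i => i %% n == r) l))%N.
Proof.
move=> hn. have hc : (0 < #|'I_n|)%N by rewrite card_ord.
have [r0 hr0] := eq_bigmax (fun r : 'I_n => count P (filter (fun i => i %% n == r) l)) hc.
exists r0 => //. rewrite (cnt_split P l hn) -hr0.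
apply leq_trans with (\sum_(r < n) \max_(r1 < n) count P (filter (fun i => i %% n == r1) l)).
  apply leq_sum => r _. exact: (@leq_bigmax _ (fun r1 : 'I_n => count P [seq i <- l | i %% n == r1]) r).
by rewrite sum_nat_const card_ord.
Qed.

Local Open Scope R_scope.

Lemma pow_count_split n (P : pred nat) l q : (0 < n)%N -> 1 <= q ->
  q ^ count P l <= rsum (iota 0 n) (fun r => (q ^ n) ^ count P (filter (fun i => i %% n == r) l)).
Proof.
move=> hn hq. have [r0 hr0 hle] := cnt_max P l hn.
apply Rle_trans with ((q ^ n) ^ count P (filter (fun i => i %% n == r0) l)).
  rewrite -pow_mult. exact: Rle_pow'.
apply (rsum_ge_mem (F := fun r => (q ^ n) ^ count P (filter (fun i => i %% n == r) l))).
- move=> r _; apply pow_le, pow_le; lra.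
- by rewrite mem_iota.
Qed.

Lemma gapped_class n k r : (0 < n)%N -> (n <= k)%N ->
  gapped n k (filter (fun i => i %% n == r) (rev (iota 0 (k - n + 1)))).
Proof.
move=> hn hk. rewrite /gapped. apply/andP; split.
- have hp : pairwise (fun x y => (y < x)%N) (rev (iota 0 (k - n + 1))).
    rewrite -sorted_pairwise; last by move=> a b c h1 h2; exact: ltn_trans h2 h1.
    rewrite rev_sorted. exact: iota_ltn_sorted.
  have hf := pairwise_filter (fun i => i %% n == r) hp.
  apply: (sub_in_pairwise (P := fun i => i %% n == r)) hf.
  + move=> x y hx hy hxy. apply: (mod_gap hn _ _ hxy); apply/eqP; [exact hx | exact hy].
  + by apply/allP => x; rewrite mem_filter => /andP [].
- apply/allP => x; rewrite mem_filter mem_rev mem_iota => /andP [_ /andP [_ h]]. lia.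
Qed.

End M7.
Import M7.

Module M8.
Import zify.

Set Implicit Arguments.
Unset Strict Implicit.
Unset Printing Implicit Defensive.
Local Open Scope R_scope.

Lemma asboolP (Q : Prop) : asbool Q = true <-> Q.
Proof. rewrite /asbool; case: excluded_middle_informative => //. Qed.

Lemma pow_le1 a m : 0 <= a <= 1 -> a ^ m <= 1.
Proof. move=> ha. rewrite -(pow1 m). apply pow_incr; lra. Qed.

Lemma pow_decr a i j : 0 <= a <= 1 -> (i <= j)%N -> a ^ j <= a ^ i.
Proof.
move=> ha hij. rewrite -(subnKC hij) pow_add.
have h1 := pow_le1 (j - i) ha. have h2 := pow_le a i (ltac:(lra)).
have := Rmult_le_compat_l _ _ _ h2 h1. lra.
Qed.

Section Card.
Variable A : finType.
Variables (X : config A -> Prop) (n k : nat).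
Hypothesis hnk : (n <= k)%N.

Lemma card_W_le (u : k.-tuple A) : (#|Wset X n (val u)| <= k - n + 1)%N.
Proof.
rewrite cardE -(size_map val).
have -> : (k - n + 1 = size [seq win n (val u) i | i <- iota 0 (k - n + 1)])%N
  by rewrite size_map size_iota.
apply uniq_leq_size; first by rewrite (map_inj_uniq val_inj) enum_uniq.
move=> w /mapP [t]; rewrite mem_enum /Wset !inE => /andP [_ hs] ->.
move: hs; rewrite /has_subword size_tuple => /hasP [i hi /eqP <-].
by apply/mapP; exists i.
Qed.

Lemma card_W_ge (u : k.-tuple A) : inB X (val u) ->
  (count (predC (rep n (val u))) (iota 0 (k - n + 1)) <= #|Wset X n (val u)|)%N.
Proof.
move=> hu. rewrite cardE -(size_map val) -size_filter -(size_map (win n (val u))).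
apply uniq_leq_size.
- rewrite map_inj_in_uniq; first by apply filter_uniq; exact: iota_uniq.
  move=> i j; rewrite !mem_filter !mem_iota /= => /andP [hi _] /andP [hj _] e.
  case: (ltngtP i j) => // hij.
  + move: hj; rewrite /rep => /negP; case. apply/hasP; exists i; first by rewrite mem_iota.
    by rewrite e.
  + move: hi; rewrite /rep => /negP; case. apply/hasP; exists j; first by rewrite mem_iota.
    by rewrite e.
- move=> w /mapP [i]; rewrite mem_filter mem_iota => /andP [_ /andP [_ hi]] ->.
  have hik : (i + n <= size (val u))%N by rewrite size_tuple; lia.
  have hs : size (win n (val u) i) == n by rewrite size_win.
  apply/mapP; exists (Tuple hs) => //. rewrite mem_enum /Wset !inE. apply/andP; split.
  + apply/asboolP. exact: inB_win.
  + rewrite /has_subword size_tuple. apply/hasP; exists i => //. rewrite mem_iota; lia.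
Qed.
End Card.

Section Bounds.
Variable A : finType.
Variables (X : config A -> Prop) (f : config A -> R) (mu : seq A -> R)
  (P K alpha gamma : R) (n0 : nat).
Hypothesis SFT : is_SFT X.
Hypothesis sip : shift_inv_prob X mu.
Hypothesis K1 : 1 < K.
Hypothesis gibbs : forall (m : nat) (x : config A), (1 <= m)%N -> X x ->
     / K <= mu (word_at x 0 m) / exp (- P * INR m + birk f m x) <= K.
Hypothesis mult : forall u v : seq A, inB X (u ++ v) ->
     mu (u ++ v) <= K * mu u * mu v /\ mu (u ++ v) / mu u <= K * mu v.
Hypothesis halpha : 0 < alpha <= 1.
Hypothesis hgamma : 0 < gamma.
Hypothesis mu_gamma : forall u : seq A, inB X u -> (n0 <= size u)%N -> mu u <= gamma ^ size u.

Let mu_ge0 : forall w, 0 <= mu w. Proof. by case: sip. Qed.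
Let mu_nil : mu [::] = 1. Proof. by case: sip. Qed.
Let mu_r : forall w, rsum (enum A) (fun a => mu (rcons w a)) = mu w. Proof. by case: sip. Qed.
Let mu_offB : forall w, ~ inB X w -> mu w = 0. Proof. by case: sip. Qed.
Let mu_mult : forall u v, inB X (u ++ v) -> mu (u ++ v) <= K * mu u * mu v.
Proof. by move=> u v /mult []. Qed.

Lemma sum_mu_B k : rsum (enum (Bset X k)) (fun t => mu (val t)) = 1.
Proof.
rewrite rsum_enum_set (rsum_extT _ (G := fun t => mu (val t))).
  by rewrite rsum_tuple rsum_mu.
move=> t. case: ifP => // hB. rewrite mu_offB //.
move=> h. move: hB; rewrite /Bset inE. by move/asboolP: h => ->.
Qed.

Lemma Ephi_lower n k : (n <= k)%N ->
  / K * alpha ^ (k - n + 1) * exp (P * INR k) <= Ephi X f alpha n k.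
Proof.
move=> hnk. rewrite Ephi_eq.
apply Rle_trans with (rsum (enum (Bset X k)) (fun t => / K * alpha ^ (k - n + 1) * exp (P * INR k) * mu (val t))).
  by rewrite rsum_scal sum_mu_B; lra.
apply rsum_le => t. rewrite mem_enum /Bset inE => /asboolP hB.
have [h1 _] := Sk_bounds SFT mu_nil K1 gibbs hB. rewrite size_tuple in h1.
have h2 : alpha ^ (k - n + 1) <= alpha ^ #|Wset X n (val t)|.
  apply pow_decr; [lra | exact: card_W_le].
have hKi : 0 <= / K by left; apply Rinv_0_lt_compat; lra.
have he := exp_pos (P * INR k). have hm := mu_ge0 (val t).
have ha := pow_le alpha (k - n + 1) (ltac:(lra)).
have hc : 0 <= / K * exp (P * INR k) * mu (val t).
  apply Rmult_le_pos => //; apply Rmult_le_pos; lra.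
apply Rle_trans with ((/ K * exp (P * INR k) * mu (val t)) * alpha ^ (k - n + 1)).
  right. set iK := / K. set e := exp _. set m := mu _. set a := alpha ^ _. ring.
apply Rmult_le_compat => //.
Qed.

Lemma upper_sum n k : (0 < n)%N -> (n <= k)%N -> (n0 <= n)%N ->
  rsum (allw A k) (fun u => mu u * (/ alpha) ^ count (rep n u) (iota 0 (k - n + 1)))
  <= INR n * (1 + (/ alpha) ^ n * (INR k * (K * gamma ^ n))) ^ (k - n + 1).
Proof.
move=> hn hnk hn0.
have hq : 1 <= / alpha.
  rewrite -Rinv_1. apply Rinv_le_contravar; lra.
set l := rev (iota 0 (k - n + 1)).
set base := 1 + (/ alpha) ^ n * (INR k * (K * gamma ^ n)).
have hbase : 1 <= base.
  rewrite /base. have : 0 <= (/ alpha) ^ n * (INR k * (K * gamma ^ n)).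
    apply Rmult_le_pos; first (apply pow_le; lra).
    apply Rmult_le_pos; first exact: pos_INR. apply Rmult_le_pos; first lra. apply pow_le; lra.
  lra.
apply Rle_trans with (rsum (allw A k) (fun u => rsum (iota 0 n) (fun r =>
   mu u * ((/ alpha) ^ n) ^ count (rep n u) (filter (fun i => i %% n == r) l)))).
  apply rsum_le => u _. rewrite rsum_scal. apply Rmult_le_compat_l => //.
  rewrite -(count_rev _ (iota 0 _)) -/l. exact: pow_count_split.
rewrite rsum_exch.
have -> : INR n * base ^ (k - n + 1) = rsum (iota 0 n) (fun _ => base ^ (k - n + 1)).
  by rewrite rsum_const size_iota.
apply rsum_le => r _.
apply Rle_trans with (base ^ size (filter (fun i => i %% n == r) l)).
  have hp : 1 <= (/ alpha) ^ n by apply pow_R1_Rle.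
  have := @rep_bound A n X mu K gamma n0 mu_r mu_ge0 mu_offB mu_mult mu_gamma hn0
    (ltac:(lra)) hgamma mu_nil (filter (fun i => i %% n == r) l) k ((/ alpha) ^ n) hp
    (gapped_class r hn hnk).
  by rewrite -/base.
apply Rle_pow' => //.
by rewrite size_filter (leq_trans (count_size _ _)) // /l size_rev size_iota.
Qed.

Lemma Ephi_upper n k : (0 < n)%N -> (n <= k)%N -> (n0 <= n)%N ->
  Ephi X f alpha n k <= K * exp (P * INR k) * alpha ^ (k - n + 1) *
    (INR n * (1 + (/ alpha) ^ n * (INR k * (K * gamma ^ n))) ^ (k - n + 1)).
Proof.
move=> hn hnk hn0. rewrite Ephi_eq.
set l := (k - n + 1)%N.
have hKe : 0 <= K * exp (P * INR k) by have := exp_pos (P * INR k); nra.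
apply Rle_trans with (rsum (enum (Bset X k)) (fun t =>
   K * exp (P * INR k) * alpha ^ l * (mu (val t) * (/ alpha) ^ count (rep n (val t)) (iota 0 l)))).
  apply rsum_le => t. rewrite mem_enum /Bset inE => /asboolP hB.
  have [_ h1] := Sk_bounds SFT mu_nil K1 gibbs hB. rewrite size_tuple in h1.
  set R := count (rep n (val t)) (iota 0 l).
  have hW := card_W_ge hnk hB. rewrite -/l in hW.
  have hRl : (R <= l)%N by rewrite /R; apply: leq_trans (count_size _ _) _; rewrite size_iota.
  have hsum : (count (rep n (val t)) (iota 0 l) + count (predC (rep n (val t))) (iota 0 l) = l)%N.
    by rewrite count_predC size_iota.
  have h2 : alpha ^ #|Wset X n (val t)| <= alpha ^ l * (/ alpha) ^ R.
    apply Rle_trans with (alpha ^ (l - R)).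
      apply pow_decr; first lra. rewrite -/R in hsum. rewrite -{1}hsum addKn. exact: hW.
    have e : alpha ^ l = alpha ^ (l - R) * alpha ^ R by rewrite -pow_add; congr (_ ^ _); lia.
    rewrite e pow_inv Rmult_assoc Rinv_r; first lra.
    apply pow_nonzero; lra.
  have hE := exp_pos (Sk X f (val t)).
  have ha := pow_le alpha #|Wset X n (val t)| (ltac:(lra)).
  apply Rle_trans with ((K * exp (P * INR k) * mu (val t)) * (alpha ^ l * (/ alpha) ^ R)).
    apply Rmult_le_compat => //. left; apply exp_pos.
  right. set m := mu _. set a1 := alpha ^ l. set a2 := (/ alpha) ^ R. set e := exp _. ring.
rewrite rsum_scal. apply Rmult_le_compat_l.
  apply Rmult_le_pos => //; apply pow_le; lra.
apply Rle_trans with (rsum (allw A k) (fun u => mu u * (/ alpha) ^ count (rep n u) (iota 0 l))).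
  rewrite -rsum_tuple rsum_enum_set. apply rsum_le => t _.
  case: ifP => _; first lra. apply Rmult_le_pos => //; apply pow_le.
  left; apply Rinv_0_lt_compat; lra.
exact: upper_sum.
Qed.
End Bounds.

End M8.
Import M8.

Module M9.

Set Implicit Arguments.
Unset Strict Implicit.
Unset Printing Implicit Defensive.
Local Open Scope R_scope.

Lemma sq_ev (lo a up : nat -> R) L N :
  (forall n, (N <= n)%N -> lo n <= a n <= up n) -> Un_cv lo L -> Un_cv up L -> Un_cv a L.
Proof.
move=> hb hlo hup eps he.
have [N1 h1] := hlo eps he. have [N2 h2] := hup eps he.
exists (maxn N (maxn N1 N2)) => m hm.
have hm' : (maxn N (maxn N1 N2) <= m)%N by apply/leP.
have hN : (N <= m)%N by apply: leq_trans hm'; apply leq_maxl.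
have hN1 : (N1 <= m)%coq_nat by apply/leP; apply: leq_trans hm'; rewrite leq_max leq_max leqnn orbT.
have hN2 : (N2 <= m)%coq_nat by apply/leP; apply: leq_trans hm'; rewrite leq_max leq_max leqnn !orbT.
have [l1 l2] := Rabs_def2 _ _ (h1 m hN1). have [u1 u2] := Rabs_def2 _ _ (h2 m hN2).
have [b1 b2] := hb m hN.
rewrite /R_dist. apply Rabs_def1; lra.
Qed.

Lemma cv_const c : Un_cv (fun _ => c) c.
Proof. move=> eps he; exists 0%nat => m _; rewrite /R_dist Rminus_eq_0 Rabs_R0; lra. Qed.

Lemma cv_ev (u v : nat -> R) L N : (forall n, (N <= n)%N -> u n = v n) -> Un_cv u L -> Un_cv v L.
Proof.
move=> he hu. apply (@sq_ev u v u L N) => //. move=> n hn; rewrite he //; lra.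
Qed.

Lemma cv_inv_n : Un_cv (fun n => / INR n) 0.
Proof.
move=> eps he. have [N hN] := INR_unbounded (/ eps). exists (N.+1) => m hm.
have hm' : INR N.+1 <= INR m by apply le_INR.
have hpos : 0 < INR m. rewrite S_INR in hm'. have := pos_INR N. lra.
rewrite /R_dist Rminus_0_r Rabs_right; last by left; apply Rinv_0_lt_compat.
have hinv : / INR m < / (/ eps).
  apply Rinv_lt_contravar; first by apply Rmult_lt_0_compat => //; apply Rinv_0_lt_compat.
  rewrite S_INR in hm'. lra.
by rewrite Rinv_inv in hinv.
Qed.

Lemma ln_le_sqrt x : 1 <= x -> 0 <= ln x <= 2 * sqrt x.
Proof.
move=> hx. have hx0 : 0 < x by lra.
split. rewrite -ln_1. apply ln_le'; lra.
have hs : 0 < sqrt x by apply sqrt_lt_R0.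
have e : ln x = 2 * ln (sqrt x).
  rewrite -{1}(sqrt_sqrt x) ?ln_mult //; lra.
have := exp_ineq1_le (ln (sqrt x)). rewrite exp_ln //. lra.
Qed.

Lemma cv_ln_n : Un_cv (fun n => ln (INR n) / INR n) 0.
Proof.
move=> eps he.
have [N hN] := INR_unbounded ((2 / eps) * (2 / eps)).
exists (N.+1) => m hm.
have hm' : INR N.+1 <= INR m by apply le_INR.
rewrite S_INR in hm'. have hN0 := pos_INR N.
have h1 : 1 <= INR m.
  have : 0 <= (2 / eps) * (2 / eps) by apply Rle_0_sqr. lra.
have [hl0 hl] := ln_le_sqrt h1.
have hs : 0 < sqrt (INR m) by apply sqrt_lt_R0; lra.
have hss := sqrt_sqrt (INR m) (ltac:(lra)).
have hbig : 2 / eps < sqrt (INR m).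
  rewrite -(sqrt_Rsqr (2 / eps)); last by left; apply Rdiv_lt_0_compat; lra.
  apply sqrt_lt_1; [apply Rle_0_sqr | lra | rewrite /Rsqr; lra].
rewrite /R_dist Rminus_0_r Rabs_right; last first.
  apply Rle_ge, Rmult_le_pos => //; left; apply Rinv_0_lt_compat; lra.
apply Rle_lt_trans with (2 / sqrt (INR m)).
  have e2 : 2 * sqrt (INR m) / INR m = 2 / sqrt (INR m).
    rewrite -{2}hss. field. lra.
  rewrite -e2. apply Rmult_le_compat_r => //. left; apply Rinv_0_lt_compat; lra.
have : 2 < eps * sqrt (INR m).
  have := Rmult_lt_compat_l eps _ _ he hbig.
  have e3 : eps * (2 / eps) = 2 by field; lra.
  rewrite e3. lra.
move=> h. apply (Rmult_lt_reg_r (sqrt (INR m))) => //. rewrite /Rdiv Rmult_assoc Rinv_l; lra.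
Qed.

Lemma cv_scal (u : nat -> R) c L : Un_cv u L -> Un_cv (fun n => c * u n) (c * L).
Proof. move=> hu. exact: (CV_mult (fun _ => c) u c L (cv_const c) hu). Qed.

Lemma cv_n2pow rho : 0 < rho < 1 -> Un_cv (fun n => INR n ^ 2 * rho ^ n) 0.
Proof.
move=> hr. set c := - ln rho.
have hc : 0 < c by rewrite /c; have := ln_increasing rho 1 (proj1 hr) (proj2 hr); rewrite ln_1; lra.
have hc4 : c / 4 > 0 by lra.
case: (cv_ln_n hc4) => N1 hN1.
apply (@sq_ev (fun _ => 0) _ (fun n => (2 / c) * / INR n) 0 (N1.+1)).
- move=> m hm. have hm1 : (N1 <= m)%coq_nat by apply/leP; apply: leq_trans hm; apply leqnSn.
  have hmpos : 0 < INR m by apply lt_0_INR; apply/ltP; apply: leq_trans hm.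
  have hlm := hN1 m hm1. rewrite /R_dist Rminus_0_r in hlm. have [hlm1 _] := Rabs_def2 _ _ hlm.
  split. apply Rmult_le_pos; [apply pow_le; lra | apply pow_le; lra].
  have hval : INR m ^ 2 * rho ^ m = exp (ln (INR m ^ 2) + ln (rho ^ m)).
    by rewrite exp_plus !exp_ln //; apply pow_lt; lra.
  have e1 : ln (INR m ^ 2) = 2 * ln (INR m) by rewrite ln_pow //=; ring.
  have e2 : ln (rho ^ m) = - c * INR m by rewrite ln_pow; [rewrite /c; ring | lra].
  have hlm2 : ln (INR m) <= c / 4 * INR m.
    have : ln (INR m) / INR m * INR m <= c / 4 * INR m.
      apply Rmult_le_compat_r; lra.
    by rewrite /Rdiv Rmult_assoc Rinv_l ?Rmult_1_r //; lra.
  rewrite hval e1 e2.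
  set t := c * INR m / 2.
  have ht : 0 < t by rewrite /t; nra.
  apply Rle_trans with (exp (- t)).
    apply exp_le'. rewrite /t. lra.
  rewrite exp_Ropp.
  have := exp_ineq1_le t => hex.
  have : / exp t <= / t by apply Rinv_le_contravar; lra.
  have -> : 2 / c * / INR m = / t by rewrite /t; field; lra.
  done.
- exact: cv_const.
- have := cv_scal (2 / c) cv_inv_n. by rewrite Rmult_0_r.
Qed.

End M9.
Import M9.

Module M10.
Import zify.

Local Open Scope R_scope.

Lemma INR_ell a b : (b <= a)%N -> INR (a - b + 1) = INR a - INR b + 1.
Proof. move=> h. have e : (a - b + 1 + b = a + 1)%N by lia.
have := f_equal INR e. rewrite !plus_INR /=. lra. Qed.

Lemma cv_eqL u L L' : Un_cv u L -> L = L' -> Un_cv u L'.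
Proof. by move=> h <-. Qed.


End M10.
Import M10.

Import zify.
Local Open Scope R_scope.
Theorem mainTheorem11 (A : finType) (X : config A -> Prop) (f : config A -> R)
    (mu : seq A -> R) (P K alpha gamma : R) (n0 : nat) (k : nat -> nat) :
  is_SFT X -> nontrivial X -> top_mixing X -> holder X f ->
  is_pressure X f P ->
  shift_inv_prob X mu ->
  1 < K ->
  (forall (m : nat) (x : config A), (1 <= m)%N -> X x ->
     / K <= mu (word_at x 0 m) / exp (- P * INR m + birk f m x) <= K) ->
  (forall u v : seq A, inB X (u ++ v) ->
     mu (u ++ v) <= K * mu u * mu v /\ mu (u ++ v) / mu u <= K * mu v) ->
  gamma0 X mu < alpha <= 1 ->
  gamma0 X mu < gamma < alpha ->
  (forall u : seq A, inB X u -> (n0 <= size u)%N -> mu u <= gamma ^ size u) ->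
  Un_cv (fun n => INR n / INR (k n)) 0 ->
  Un_cv (fun n => INR (k n) * ln (INR n) / (INR n ^ 2)) 0 ->
  (forall n : nat, (n0 <= n)%N -> (n <= k n)%N) ->
  (forall n : nat, (n0 <= n)%N ->
     / K * alpha ^ (k n - n + 1) * exp (P * INR (k n)) <= Ephi X f alpha n (k n))
  /\ Un_cv (fun n => ln (Ephi X f alpha n (k n)) / INR (k n)) (P + ln alpha).
Proof.
move=> SFT ntriv _ _ _ sip K1 gibbs mult [_ ha1] [_ hga] mu_gamma hx hk2 hnk.
have mu_nil : mu [::] = 1 by case: sip.
have hg : 0 < gamma.
  case: ntriv => x [_ [hxX _]].
  have hpos : forall m, (1 <= m)%N -> (n0 <= m)%N -> 0 < gamma ^ m.
    move=> m h1 h2. have hB := inB_word_at m hxX.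
    have := mu_pos SFT mu_nil K1 gibbs hB. have := mu_gamma _ hB.
    rewrite size_word_at => /(_ h2). lra.
  have h1 := hpos n0.+1 (ltac:(by [])) (leqnSn n0).
  have h2 := hpos n0.+2 (ltac:(by [])) (leqW (leqnSn n0)).
  have e : gamma ^ n0.+2 = gamma * gamma ^ n0.+1 by [].
  rewrite e in h2. destruct (Rle_or_lt gamma 0) as [hle|hlt]; last exact hlt.
  nra.
have halpha : 0 < alpha <= 1 by lra.
split.
  move=> n hn. exact: (Ephi_lower SFT sip K1 gibbs halpha (hnk n hn)).
set N := maxn n0 1.
have hN : forall n, (N <= n)%N -> [/\ (n0 <= n)%N, (1 <= n)%N, (n <= k n)%N,
    1 <= INR n & INR n <= INR (k n)].
  move=> n hn. have hn0 : (n0 <= n)%N by apply: leq_trans hn; apply leq_maxl.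
  have h1 : (1 <= n)%N by apply: leq_trans hn; apply leq_maxr.
  have hk := hnk n hn0. split => //.
  - by apply (le_INR 1); apply/leP.
  - by apply le_INR; apply/leP.
pose xs := fun n => INR n / INR (k n).
pose ws := fun n => / INR (k n).
pose ys := fun n => ln (INR n) * / INR (k n).
pose zs := fun n => (/ alpha) ^ n * (INR (k n) * (K * gamma ^ n)).
have hw : Un_cv ws 0.
  apply (@sq_ev (fun _ => 0) ws (fun n => / INR n) 0 N); [|exact: cv_const|exact: cv_inv_n].
  move=> n /hN [_ _ _ h1 h2]. rewrite /ws. split.
  - left; apply Rinv_0_lt_compat; lra.
  - apply Rinv_le_contravar; lra.
have hy : Un_cv ys 0.
  apply (@sq_ev (fun _ => 0) ys (fun n => ln (INR n) / INR n) 0 N); [|exact: cv_const|exact: cv_ln_n].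
  move=> n /hN [_ _ _ h1 h2]. rewrite /ys.
  have hl : 0 <= ln (INR n) by rewrite -ln_1; apply ln_le'; lra.
  split.
  - apply Rmult_le_pos => //; left; apply Rinv_0_lt_compat; lra.
  - apply Rmult_le_compat_l => //. apply Rinv_le_contravar; lra.
have hz : Un_cv zs 0.
  have hrho : 0 < gamma / alpha < 1.
    split; first by apply Rdiv_lt_0_compat; lra.
    apply (Rmult_lt_reg_r alpha); first lra. rewrite /Rdiv Rmult_assoc Rinv_l; lra.
  have hc2 := cv_scal K (cv_n2pow hrho). rewrite Rmult_0_r in hc2.
  have he1 : (1 : R) > 0 by lra.
  case: (hk2 1 he1) => N2 hN2.
  apply (@sq_ev (fun _ => 0) zs (fun n => K * (INR n ^ 2 * (gamma / alpha) ^ n)) 0 (maxn N (maxn N2 3)));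
    [|exact: cv_const|exact: hc2].
  move=> n hn.
  have hnN : (N <= n)%N by apply: leq_trans hn; apply leq_maxl.
  have hnN2 : (N2 <= n)%coq_nat by apply/leP; apply: leq_trans hn; rewrite leq_max leq_max leqnn orbT.
  have hn3 : (3 <= n)%N by apply: leq_trans hn; rewrite leq_max leq_max leqnn !orbT.
  have [_ _ _ h1 h2] := hN n hnN.
  have h3 : 3 <= INR n by have := le_INR 3 n (ltac:(by apply/leP)); rewrite /= ; lra.
  have hln : 1 <= ln (INR n).
    rewrite -(ln_exp 1). apply ln_le'; first apply exp_pos. have := exp_le_3. lra.
  have hq := hN2 n hnN2. rewrite /R_dist Rminus_0_r in hq. have [hq1 _] := Rabs_def2 _ _ hq.
  have hn2 : 0 < INR n ^ 2 by apply pow_lt; lra.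
  have hkn2 : INR (k n) <= INR n ^ 2.
    have : INR (k n) * ln (INR n) < INR n ^ 2.
      have := Rmult_lt_compat_r (INR n ^ 2) _ _ hn2 hq1.
      rewrite /Rdiv Rmult_assoc Rinv_l; lra.
    have : INR (k n) <= INR (k n) * ln (INR n).
      have := Rmult_le_compat_l (INR (k n)) _ _ (ltac:(lra)) hln. lra.
    lra.
  have hga' : 0 <= gamma ^ n by apply pow_le; lra.
  have hai : 0 <= (/ alpha) ^ n by apply pow_le; left; apply Rinv_0_lt_compat; lra.
  have e : zs n = K * (INR (k n) * (gamma / alpha) ^ n).
    rewrite /zs /Rdiv Rpow_mult_distr. ring.
  rewrite e. have hr : 0 <= (gamma / alpha) ^ n by apply pow_le; lra.
  split.
  - apply Rmult_le_pos; first lra. apply Rmult_le_pos; lra.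
  - apply Rmult_le_compat_l; first lra. apply Rmult_le_compat_r => //.
have c1 : Un_cv (fun n => 1 - xs n + ws n) (1 - 0 + 0).
  exact: (CV_plus _ _ _ _ (CV_minus _ _ _ _ (cv_const 1) hx) hw).
have c2 := CV_mult _ _ _ _ c1 (cv_const (ln alpha)).
have c3 := CV_plus _ _ _ _ (cv_const P) c2.
have c4 := CV_mult _ _ _ _ (cv_const (ln K)) hw.
have clo := CV_minus _ _ _ _ c3 c4.
have cup := CV_plus _ _ _ _ (CV_plus _ _ _ _ (CV_plus _ _ _ _ c3 c4) hy) hz.
eapply (@sq_ev _ _ _ (P + ln alpha) N); last 2 first.
- refine (@cv_eqL _ _ _ clo _); ring.
- refine (@cv_eqL _ _ _ cup _); ring.
move=> n /hN [hn0 h1n hnk' h1 h2] /=.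
have hL := Ephi_lower SFT sip K1 gibbs halpha hnk'.
have hU := Ephi_upper SFT sip K1 gibbs mult halpha hg mu_gamma h1n hnk' hn0.
rewrite /xs /ws /ys /zs.
set E := Ephi X f alpha n (k n) in hL hU *.
set l := (k n - n + 1)%N in hL hU.
have hl : INR l = INR (k n) - INR n + 1 := INR_ell _ _ hnk'.
set kk := INR (k n) in hl h2 hL hU *.
set nn := INR n in hl h1 h2 hU *.
set z := (/ alpha) ^ n * (kk * (K * gamma ^ n)) in hU *.
have hk0 : 0 < kk by lra.
have hz0 : 0 <= z.
  rewrite /z. apply Rmult_le_pos; first (apply pow_le; left; apply Rinv_0_lt_compat; lra).
  apply Rmult_le_pos; first lra. apply Rmult_le_pos; first lra. apply pow_le; lra.
have hKi : 0 < / K by apply Rinv_0_lt_compat; lra.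
have hal : 0 < alpha ^ l by apply pow_lt; lra.
have hex : 0 < exp (P * kk) by apply exp_pos.
have hbl : 0 < (1 + z) ^ l by apply pow_lt; lra.
have hLb : 0 < / K * alpha ^ l * exp (P * kk).
  apply Rmult_lt_0_compat => //; apply Rmult_lt_0_compat => //.
have hE : 0 < E by lra.
have lnLb : ln (/ K * alpha ^ l * exp (P * kk)) = - ln K + INR l * ln alpha + P * kk.
  rewrite ln_mult //; last by apply Rmult_lt_0_compat.
  rewrite ln_mult // ln_Rinv; last lra. rewrite ln_pow; last lra. rewrite ln_exp. ring.
have lnUb : ln (K * exp (P * kk) * alpha ^ l * (nn * (1 + z) ^ l)) =
    ln K + P * kk + INR l * ln alpha + ln nn + INR l * ln (1 + z).
  have hnn : 0 < nn by lra.
  rewrite ln_mult; first last.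
  - apply Rmult_lt_0_compat => //.
  - apply Rmult_lt_0_compat => //; apply Rmult_lt_0_compat => //; lra.
  rewrite ln_mult //; last by apply Rmult_lt_0_compat => //; lra.
  rewrite ln_mult //; last lra.
  rewrite ln_mult // ln_exp !ln_pow //; [ring|lra|lra].
have hlb : 0 <= ln (1 + z) by rewrite -ln_1; apply ln_le'; lra.
have hlz : ln (1 + z) <= z by have := exp_ineq1_le (ln (1 + z)); rewrite exp_ln; lra.
have hik : 0 < / kk by apply Rinv_0_lt_compat.
split.
- apply Rle_trans with (ln (/ K * alpha ^ l * exp (P * kk)) / kk).
    right. rewrite lnLb hl. field. lra.
  apply Rmult_le_compat_r; first lra. apply ln_le' => //.
- apply Rle_trans with (ln (K * exp (P * kk) * alpha ^ l * (nn * (1 + z) ^ l)) / kk).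
    apply Rmult_le_compat_r; first lra. apply ln_le' => //.
  rewrite lnUb.
  have hlk : INR l * ln (1 + z) / kk <= z.
    apply Rle_trans with (ln (1 + z)) => //.
    have : INR l * ln (1 + z) <= kk * ln (1 + z) by apply Rmult_le_compat_r => //; lra.
    move=> h. apply (Rmult_le_reg_r kk) => //. rewrite /Rdiv Rmult_assoc Rinv_l; lra.
  have e : (ln K + P * kk + INR l * ln alpha + ln nn + INR l * ln (1 + z)) / kk =
     P + (1 - nn / kk + / kk) * ln alpha + ln K * / kk + ln nn * / kk + INR l * ln (1 + z) / kk.
    rewrite hl. field. lra.
  rewrite e. lra.
Qed.
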